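(* Let $\Psi : H^*(SU(3)/T_{SU(3)};\mathbb{C})\to H^*(SU(3)/T_{SU(3)};\mathbb{C})$ be a ring homomorphism. Then there exist $\omega_1,\omega_2\in W$ such that $\omega_1\circ \Psi\circ \omega_2$ is represented by either $\lambda\cdot \left(\begin{smallmatrix} 1 & 0\\ 0 & 1\end{smallmatrix}\right)$ with $\lambda\in\mathbb{C}^*$, or by $\lambda\cdot \left(\begin{smallmatrix} 1 & \varsigma\\ 0 & 0\end{smallmatrix}\right)$ with $\lambda\in\mathbb{C}$, where $\varsigma$ satisfies $\varsigma^2+\varsigma+1=0$.
   Context: $T_{SU(3)}$ denotes the standard maximal torus of $SU(3)$ (unitary diagonal matrices of determinant one), and $SU(3)/T_{SU(3)}$ is the six-dimensional complex flag manifold. Its complex cohomology is identified with $\mathbb{C}[x_1,x_2]/(x_1^2+x_2^2+x_1 x_2,\; x_1^2 x_2+x_1 x_2^2)$, where $x_1,x_2,x_3$ are the standard generators of $H^*(BT_{U(3)};\mathbb{Z})=\mathbb{Z}[x_1,x_2,x_3]$ (so $x_1^3=x_2^3=x_1^2x_2^2=0$ in this ring). Any ring endomorphism of $H^*(SU(3)/T_{SU(3)};\mathbb{C})$ is determined by its restriction to $H^2(SU(3)/T_{SU(3)};\mathbb{C})$, and ''represented by a matrix'' refers to the matrix $\left(\begin{smallmatrix} a_{11} & a_{12}\\ a_{21} & a_{22}\end{smallmatrix}\right)$ of this restriction with respect to the basis $(x_1,x_2)$. $W\cong S_3$ is the Weyl group of $U(3)$ (equivalently $N(T_{SU(3)})/T_{SU(3)}$),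 acting on the cohomology of $SU(3)/T_{SU(3)}$ via permutation of $x_1,x_2,x_3$; the permutations $(1),(12),(13),(23),(123),(321)$ act on $H^2$ by the matrices $\left(\begin{smallmatrix} 1&0\\0&1\end{smallmatrix}\right)$, $\left(\begin{smallmatrix} 0&1\\1&0\end{smallmatrix}\right)$, $\left(\begin{smallmatrix} -1&0\\-1&1\end{smallmatrix}\right)$, $\left(\begin{smallmatrix} 1&-1\\0&-1\end{smallmatrix}\right)$, $\left(\begin{smallmatrix} 0&-1\\1&-1\end{smallmatrix}\right)$, $\left(\begin{smallmatrix} -1&1\\-1&0\end{smallmatrix}\right)$ respectively. $W$ acts on ring endomorphisms by pre- and post-composition. *)

(* Defs.v *)
From HB Require Import structures.
From mathcomp Require Import all_boot all_fingroup all_algebra.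
From mathcomp Require Import boolp.
From mathcomp Require Import complex.
From mathcomp Require Import Rstruct.
From mathcomp Require Import mpoly.

Set Implicit Arguments.
Unset Strict Implicit.
Unset Printing Implicit Defensive.

Import GRing.Theory.
Local Open Scope ring_scope.
Local Open Scope quotient_scope.

Notation CC := (complex Rdefinitions.R).

(* Polynomial ring C[x1,x2] = H^*(BT_{SU(3)}; C); x3 = -x1-x2. *)
Notation Pol := {mpoly CC[2]}.
Definition x1 : Pol := 'X_0.
Definition x2 : Pol := 'X_1.
Definition x3 : Pol := - (x1 + x2).

Definition rel1 : Pol := x1 ^+ 2 + x2 ^+ 2 + x1 * x2.
Definition rel2 : Pol := x1 ^+ 2 * x2 + x1 * x2 ^+ 2.

Definition inI (p : Pol) : bool :=
  `[< exists a b : Pol, p = a * rel1 + b * rel2 >].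

Lemma inI_idealr_closed : idealr_closed inI.
Proof.
split.
- by apply/asboolP; exists 0, 0; rewrite !mul0r addr0.
- apply/negP => /asboolP [a [b E]].
  have h1 : rel1.@[fun _ : 'I_2 => (0 : CC)] = 0.
    by rewrite /rel1 /x1 /x2 !expr2 !(mevalD, mevalM, mevalXU) !(mulr0, mul0r, addr0).
  have h2 : rel2.@[fun _ : 'I_2 => (0 : CC)] = 0.
    by rewrite /rel2 /x1 /x2 !expr2 !(mevalD, mevalM, mevalXU) !(mulr0, mul0r, addr0).
  have := congr1 (meval (fun _ : 'I_2 => (0 : CC))) E.
  rewrite meval1 mevalD !mevalM h1 h2 !mulr0 addr0 => /eqP.
  by rewrite oner_eq0.
- move=> c u v /asboolP [a [b Eu]] /asboolP [a' [b' Ev]].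
  apply/asboolP; exists (c * a + a'), (c * b + b'); rewrite Eu Ev.
  rewrite mulrDr !mulrDl !mulrA.
  set A := c * a * rel1; set B := c * b * rel2; set A' := a' * rel1; set B' := b' * rel2.
  by rewrite -!addrA; congr (_ + _); rewrite !addrA [B + _]addrC.
Qed.

HB.instance Definition _ := isIdealr.Build Pol inI inI_idealr_closed.

Definition Iid : idealr Pol := inI.

(* The cohomology ring H^*(SU(3)/T_{SU(3)}; C) = C[x1,x2]/(rel1, rel2). *)
Notation Hcoh := {ideal_quot Iid}.

Definition piH (p : Pol) : Hcoh := \pi_Hcoh p.

Definition inH2 (h : Hcoh) : Prop :=
  exists a b : CC, h = piH (a *: x1 + b *: x2).

Definition graded_endo (Psi : {rmorphism Hcoh -> Hcoh}) : Prop :=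
  (forall c : CC, Psi (piH c%:MP) = piH c%:MP) /\
  (forall h, inH2 h -> inH2 (Psi h)).

Definition represented_by (f : Hcoh -> Hcoh) (M : 'M[CC]_2) : Prop :=
  f (piH x1) = piH (M 0 0 *: x1 + M 1 0 *: x2) /\
  f (piH x2) = piH (M 0 1 *: x1 + M 1 1 *: x2).

(* Weyl group W = S_3 acting by permuting x1, x2, x3:  x_i |-> x_{s(i)}. *)
Definition xs (i : 'I_3) : Pol :=
  if i == 0 :> nat then x1 else if i == 1 :> nat then x2 else x3.

Definition Wsubst (s : 'S_3) : 2.-tuple Pol :=
  [tuple xs (s (inord 0)); xs (s (inord 1))].

Definition Wact (s : 'S_3) (h : Hcoh) : Hcoh :=
  piH (comp_mpoly (Wsubst s) (generic_quotient.repr h)).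

Definition mx_1z00 (z : CC) : 'M[CC]_2 :=
  \matrix_(i < 2, j < 2) (if i == 0 :> nat then (if j == 0 :> nat then 1 else z) else 0).

(* Main.v *)
Require Import Defs.
From HB Require Import structures.
From mathcomp Require Import all_boot all_fingroup all_algebra.
From mathcomp Require Import boolp complex Rstruct mpoly.
From mathcomp Require Import ring.
Import GRing.Theory Num.Theory.
Local Open Scope ring_scope.

Lemma piH_eq (p q : Pol) : piH p = piH q -> exists A B : Pol, p - q = A * rel1 + B * rel2.
Proof.
move=> h; have : (p - q) \in Iid by rewrite Quotient.idealrBE; apply/eqP.
by move=> /asboolP.
Qed.

Lemma piH_eq2 (p q A B : Pol) : p - q = A * rel1 + B * rel2 -> piH p = piH q.
Proof.
move=> h; have : (p - q) \in Iid by apply/asboolP; exists A, B.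
by rewrite Quotient.idealrBE => /eqP.
Qed.

Lemma piHD p q : piH (p + q) = piH p + piH q. Proof. exact: rmorphD. Qed.
Lemma piHM p q : piH (p * q) = piH p * piH q. Proof. exact: rmorphM. Qed.
Lemma piH0 : piH 0 = 0. Proof. exact: rmorph0. Qed.

Definition lin (u v : CC) : Pol := u *: x1 + v *: x2.

Definition ev (u : CC) : Pol -> {poly CC} :=
  mmap (@polyC CC) (fun i : 'I_2 => if i == 0 :> nat then u *: 'X else 'X).

Lemma evD u p q : ev u (p + q) = ev u p + ev u q. Proof. exact: rmorphD. Qed.
Lemma evM u p q : ev u (p * q) = ev u p * ev u q. Proof. exact: rmorphM. Qed.
Lemma evx1 u : ev u x1 = u%:P * 'X.
Proof. by rewrite /ev /x1 mmapX mmap1U /= mul_polyC. Qed.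
Lemma evx2 u : ev u x2 = 'X.
Proof. by rewrite /ev /x2 mmapX mmap1U. Qed.
Lemma evZ u k p : ev u (k *: p) = k%:P * ev u p.
Proof. by rewrite /ev mmapZ. Qed.
Lemma evlin u a c : ev u (lin a c) = (a * u + c)%:P * 'X.
Proof.
rewrite /lin evD !evZ evx1 evx2 mulrA -polyCM -mulrDl -polyCD //.
Qed.

Lemma ev_rel1 u : u^+2 + u + 1 = 0 -> ev u rel1 = 0.
Proof.
move=> hu; rewrite /rel1 !evD !evM ?expr2 ?evM evx1 evx2.
have -> : u%:P * 'X * (u%:P * 'X) + 'X * 'X + u%:P * 'X * 'X
   = (u^+2 + u + 1)%:P * ('X * 'X) :> {poly CC}.
  by rewrite !polyCD rmorphXn; ring.
by rewrite hu mul0r.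
Qed.

Lemma ev_rel2 u : u^+2 + u + 1 = 0 -> ev u rel2 = - 'X^3.
Proof.
move=> hu; rewrite /rel2 !evD !evM ?expr2 ?evM evx1 evx2.
have -> : u%:P * 'X * (u%:P * 'X) * 'X + u%:P * 'X * ('X * 'X)
   = ((u^+2 + u + 1)%:P - 1) * 'X^3 :> {poly CC}.
  by rewrite !polyCD rmorphXn; ring.
by rewrite hu polyC0 sub0r mulN1r.
Qed.

Lemma ev_coef0 u v p : (ev u p)`_0 = (ev v p)`_0.
Proof.
rewrite -!horner_coef0 /ev /mmap !horner_sum; apply: eq_bigr => m _.
rewrite !hornerM !hornerC; congr (_ * _).
rewrite /mmap1 !horner_prod; apply: eq_bigr => i _.
rewrite !horner_exp; case: ifP => _; by rewrite ?hornerZ hornerX ?mulr0.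
Qed.

Lemma condQ u a b c d : u^+2 + u + 1 = 0 ->
  piH (lin a c ^+ 2 + lin b d ^+ 2 + lin a c * lin b d) = piH 0 ->
  (a*u+c)^+2 + (b*u+d)^+2 + (a*u+c)*(b*u+d) = 0.
Proof.
move=> hu /piH_eq [A [B E]].
have := congr1 (fun p => (ev u p)`_2) E.
rewrite /= subr0 !evD !evM ev_rel1 // ev_rel2 // ?expr2 ?evM !evlin.
have -> : (a * u + c)%:P * 'X * ((a * u + c)%:P * 'X) + (b * u + d)%:P * 'X * ((b * u + d)%:P * 'X) +
   (a * u + c)%:P * 'X * ((b * u + d)%:P * 'X)
  = ((a*u+c)^+2 + (b*u+d)^+2 + (a*u+c)*(b*u+d))%:P * 'X^2 :> {poly CC}.
  by rewrite !polyCD !polyCM ?rmorphXn; ring.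
rewrite mulr0 add0r mulrN coefN !coefMXn /= ?subnn coefC /= oppr0 => h; rewrite -h; ring.
Qed.

Lemma condC u v a b c d : u^+2 + u + 1 = 0 -> v^+2 + v + 1 = 0 ->
  piH (lin a c ^+ 2 * lin b d + lin a c * lin b d ^+ 2) = piH 0 ->
  (a*u+c)^+2*(b*u+d) + (a*u+c)*(b*u+d)^+2 = (a*v+c)^+2*(b*v+d) + (a*v+c)*(b*v+d)^+2.
Proof.
move=> hu hv /piH_eq [A [B E]].
have key : forall w, w^+2 + w + 1 = 0 ->
   (a*w+c)^+2*(b*w+d) + (a*w+c)*(b*w+d)^+2 = - (ev w B)`_0.
  move=> w hw.
  have := congr1 (fun p => (ev w p)`_3) E.
  rewrite /= subr0 !evD !evM ev_rel1 // ev_rel2 // ?expr2 ?evM !evlin.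
  have -> : (a * w + c)%:P * 'X * ((a * w + c)%:P * 'X) * ((b * w + d)%:P * 'X) +
     (a * w + c)%:P * 'X * ((b * w + d)%:P * 'X * ((b * w + d)%:P * 'X))
    = ((a*w+c)^+2*(b*w+d) + (a*w+c)*(b*w+d)^+2)%:P * 'X^3 :> {poly CC}.
    by rewrite !polyCD !polyCM ?rmorphXn; ring.
  rewrite mulr0 add0r mulrN coefN !coefMXn /= ?subnn coefC /= => h; rewrite -h; ring.
by rewrite (key u hu) (key v hv) (ev_coef0 u v).
Qed.
Lemma certL (N : nat) (k1 k2 k3 k4 : CC) {z x y u1 v1 u2 v2 u3 v3 : CC} :
  u1 = v1 -> u2 = v2 -> u3 = v3 -> z^+2 + z + 1 = 0 ->
  N.+1%:R * (x - y) = k1 * (u1 - v1) + k2 * (u2 - v2) + k3 * (u3 - v3)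
     + k4 * (z^+2 + z + 1) -> x = y.
Proof.
move=> -> -> -> ->; rewrite !subrr !mulr0 !addr0 => /eqP.
by rewrite mulf_eq0 pnatr_eq0 /= subr_eq0 => /eqP.
Qed.

Definition app (W : 'M[CC]_2) (p : CC * CC) : CC * CC :=
  (W 0 0 * p.1 + W 0 1 * p.2, W 1 0 * p.1 + W 1 1 * p.2).
Definition mk22 (a b c d : CC) : 'M[CC]_2 :=
  \matrix_(i < 2, j < 2) if i == 0 :> nat then (if j == 0 :> nat then a else b)
                         else (if j == 0 :> nat then c else d).
Definition Wm (k : nat) : 'M[CC]_2 :=
  match k with
  | 0 => mk22 1 0 0 1
  | 1 => mk22 0 1 1 0
  | 2 => mk22 (-1) 0 (-1) 1
  | 3 => mk22 1 (-1) 0 (-1)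
  | 4 => mk22 0 (-1) 1 (-1)
  | _ => mk22 (-1) 1 (-1) 0
  end.
Definition Good k1 k2 (M T : 'M[CC]_2) :=
  app (Wm k1) (app M (app (Wm k2) (1, 0))) = (T 0 0, T 1 0) /\
  app (Wm k1) (app M (app (Wm k2) (0, 1))) = (T 0 1, T 1 1).

Lemma core {z a b c d : CC} : z^+2 + z + 1 = 0 ->
  (a*z+c)^+2 + (b*z+d)^+2 + (a*z+c)*(b*z+d) = 0 ->
  (a*z^+2+c)^+2 + (b*z^+2+d)^+2 + (a*z^+2+c)*(b*z^+2+d) = 0 ->
  (a*z+c)^+2*(b*z+d) + (a*z+c)*(b*z+d)^+2 =
  (a*z^+2+c)^+2*(b*z^+2+d) + (a*z^+2+c)*(b*z^+2+d)^+2 ->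
  exists k1 k2 : nat,
    (exists l : CC, l != 0 /\ Good k1 k2 (mk22 a b c d) (l *: 1%:M)) \/
    (exists l vs : CC, vs^+2 + vs + 1 = 0 /\ Good k1 k2 (mk22 a b c d) (l *: mx_1z00 vs)).
Proof.
move=> hz hP hR hC.
have hz0 : (z == 0) = false.
  apply/negP => /eqP z0; move: hz; rewrite z0 expr0n /= !add0r => /eqP.
  by rewrite oner_eq0.
have hz3 : z^+3 = 1.
  have -> : z^+3 = (z - 1) * (z^+2 + z + 1) + 1 by ring.
  by rewrite hz mulr0 add0r.
have hz2 : (z^+2)^+2 + z^+2 + 1 = 0.
  have -> : (z^+2)^+2 + z^+2 + 1 = z * z^+3 + z^+2 + 1 by ring.
  by rewrite hz3 mulr1 -hz; ring.
have hQ : forall x y : CC, x^+2 + y^+2 + x*y = 0 -> x = z*y \/ x = z^+2*y.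
  move=> x y h.
  have : (x - z*y) * (x - z^+2*y) = 0.
    rewrite -h; apply/eqP; rewrite -subr_eq0; apply/eqP.
    have -> : (x - z*y) * (x - z^+2*y) - (x^+2 + y^+2 + x*y)
       = (z^+2 + z + 1) * (- x*y) + y^+2 * (z^+3 - 1) by ring.
    by rewrite hz hz3 subrr mul0r mulr0 addr0.
  by move/eqP; rewrite mulf_eq0 !subr_eq0 => /orP [/eqP -> | /eqP ->]; [left|right].
have hCe : forall e x y : CC, e^+2 + e + 1 = 0 -> x = e*y -> x^+2*y + x*y^+2 = - y^+3.
  move=> e x y he ->.
  have -> : (e*y)^+2*y + (e*y)*y^+2 = (e^+2 + e + 1) * y^+3 - y^+3 by ring.
  by rewrite he mul0r add0r.
have hcube : forall x y : CC, x^+3 = y^+3 -> y = x \/ y = z*x \/ y = z^+2*x.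
  move=> x y h.
  have : (y - x) * (y - z*x) * (y - z^+2*x) = 0.
    have -> : (y - x) * (y - z*x) * (y - z^+2*x) =
      (y^+3 - x^+3) - (z^+2 + z + 1) * (y^+2*x - y*x^+2) + (z^+3 - 1) * (y * x^+2 - x^+3) by ring.
    by rewrite h subrr hz hz3 subrr !mul0r !subr0 addr0.
  move/eqP; rewrite !mulf_eq0 !subr_eq0 => /orP [/orP [/eqP ->|/eqP ->]|/eqP ->].
  - by left.
  - by right; left.
  - by right; right.
have he1 : forall e, e = z \/ e = z^+2 -> e^+2 + e + 1 = 0.
  by move=> e [->|->].
have cubeq : (b*z+d)^+3 = (b*z^+2+d)^+3.
  have [e1|e1] := hQ _ _ hP; have [e2|e2] := hQ _ _ hR;
  move: hC; rewrite (hCe _ _ _ _ e1) ?(hCe _ _ _ _ e2) //;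
  by move/eqP; rewrite eqr_opp => /eqP.
have [P20|hP2] := eqVneq (b*z+d) 0.
  have R20 : b*z^+2+d = 0.
    have : (b*z^+2+d)^+3 = 0 by rewrite -cubeq P20; ring.
    by move/eqP; rewrite expf_eq0 /= => /eqP.
  have P10 : a*z+c = 0.
    have : (a*z+c)^+2 = 0 by rewrite -hP P20; ring.
    by move/eqP; rewrite expf_eq0 /= => /eqP.
  have R10 : a*z^+2+c = 0.
    have : (a*z^+2+c)^+2 = 0 by rewrite -hR R20; ring.
    by move/eqP; rewrite expf_eq0 /= => /eqP.
  have zz : z - z^+2 != 0.
    apply/negP => /eqP h0.
    have : z * (1 - z) = 0 by rewrite -h0; ring.
    move/eqP; rewrite mulf_eq0 hz0 /= subr_eq0 => /eqP z1.
    move: hz; rewrite -z1 expr1n => /eqP.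
    have -> : (1 + 1 + 1 : CC) = 3%:R by ring.
    by rewrite pnatr_eq0.
  have a0 : a = 0.
    have : a * (z - z^+2) = 0 by rewrite -[RHS](subrr 0) -{1}P10 -R10; ring.
    by move/eqP; rewrite mulf_eq0 (negbTE zz) orbF => /eqP.
  have b0 : b = 0.
    have : b * (z - z^+2) = 0 by rewrite -[RHS](subrr 0) -{1}P20 -R20; ring.
    by move/eqP; rewrite mulf_eq0 (negbTE zz) orbF => /eqP.
  have c0 : c = 0 by move: P10; rewrite a0 mul0r add0r.
  have d0 : d = 0 by move: P20; rewrite b0 mul0r add0r.
  exists 0%N, 0%N; right; exists 0; exists z; split => //.
  rewrite /Good /app /= !mxE /= a0 b0 c0 d0; split; congr pair; ring.
have [e1|e1] := hQ _ _ hP; have [e2|e2] := hQ _ _ hR;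
have [e3|[e3|e3]] := hcube _ _ cubeq.
  - exists 1%N, 0%N.
    right; exists (z * (b*z+d)); exists (z^+2); split; first by exact hz2.
    rewrite /Good /app /= !mxE /=; split; congr pair.
    + by apply: (certL 2 ((1%:R) - (z)) ((2%:R) + (z)) (- (1%:R) + (z)) (- (b*z) + (b*z^+2) - (a*z)) e1 e2 e3 hz); ring.
    + by apply: (certL 2 (- (1%:R) - (2%:R*z)) ((1%:R) + (2%:R*z)) (- (2%:R) - (z)) (- (2%:R*b*z) + (2%:R*b*z^+2) + (3%:R*a) - (2%:R*a*z)) e1 e2 e3 hz); ring.
    + by apply: (certL 2 0 0 ((2%:R) + (z)) ((3%:R*d) - (3%:R*d*z) + (2%:R*b*z) - (3%:R*b*z^+2)) e1 e2 e3 hz); ring.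
    + by apply: (certL 2 0 0 ((1%:R) + (2%:R*z)) ((3%:R*b) - (2%:R*b*z)) e1 e2 e3 hz); ring.
  - exists 0%N, 0%N.
    right; exists (1 * (b*z+d)); exists (z^+2); split; first by exact hz2.
    rewrite /Good /app /= !mxE /=; split; congr pair.
    + by apply: (certL 2 (- (1%:R) - (2%:R*z)) ((1%:R) + (2%:R*z)) (- (2%:R) - (z)) (- (d) - (3%:R*b*z) + (2%:R*b*z^+2) + (3%:R*a) - (2%:R*a*z)) e1 e2 e3 hz); ring.
    + by apply: (certL 2 ((1%:R) - (z)) ((2%:R) + (z)) (- (1%:R) + (z)) ((d) + (b*z^+2) - (a*z)) e1 e2 e3 hz); ring.
    + by apply: (certL 2 0 0 ((1%:R) + (2%:R*z)) (- (d) + (3%:R*b) - (3%:R*b*z)) e1 e2 e3 hz); ring.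
    + by apply: (certL 2 0 0 ((2%:R) + (z)) ((d)) e1 e2 e3 hz); ring.
  - exists 2%N, 0%N.
    right; exists (z^+2 * (b*z+d)); exists (z^+2); split; first by exact hz2.
    rewrite /Good /app /= !mxE /=; split; congr pair.
    + by apply: (certL 2 ((1%:R) + (2%:R*z)) (- (1%:R) - (2%:R*z)) ((2%:R) + (z)) (- (2%:R*d) + (d*z) - (b*z^+2) - (3%:R*a) + (2%:R*a*z)) e1 e2 e3 hz); ring.
    + by apply: (certL 2 ((2%:R) + (z)) ((1%:R) - (z)) ((1%:R) + (2%:R*z)) (- (d) + (2%:R*d*z) + (b*z^+2) - (3%:R*a) + (a*z)) e1 e2 e3 hz); ring.
    + by apply: (certL 2 0 0 (- (1%:R) - (2%:R*z)) ((d) + (d*z) - (3%:R*d*z^+2) - (3%:R*b) + (3%:R*b*z) + (b*z^+2) - (3%:R*b*z^+3)) e1 e2 e3 hz); ring.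
    + by apply: (certL 2 0 0 ((1%:R) - (z)) ((2%:R*d) - (d*z) - (3%:R*b) + (3%:R*b*z) - (b*z^+2)) e1 e2 e3 hz); ring.
  - exists 0%N, 0%N.
    left; exists (1 * (b*z+d)); split; first by apply: mulf_neq0; rewrite // ?oppr_eq0 ?expf_eq0 ?oner_eq0 /= ?hz0.
    rewrite /Good /app /= !mxE /=; split; congr pair.
    + by apply: (certL 2 (- (1%:R) - (2%:R*z)) ((1%:R) + (2%:R*z)) ((1%:R) - (z)) (- (3%:R*d) + (2%:R*d*z) - (2%:R*b*z) - (b*z^+2) + (2%:R*b*z^+3) + (3%:R*a) - (2%:R*a*z)) e1 e2 e3 hz); ring.
    + by apply: (certL 2 ((1%:R) - (z)) ((2%:R) + (z)) (- (1%:R) - (2%:R*z)) ((d*z) - (b*z) + (b*z^+2) + (b*z^+3) - (a*z)) e1 e2 e3 hz); ring.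
    + by apply: (certL 2 0 0 ((1%:R) + (2%:R*z)) ((3%:R*b) - (2%:R*b*z)) e1 e2 e3 hz); ring.
    + by apply: (certL 2 0 0 ((2%:R) + (z)) (- (b*z)) e1 e2 e3 hz); ring.
  - exists 0%N, 4%N.
    left; exists (z^+2 * (b*z+d)); split; first by apply: mulf_neq0; rewrite // ?oppr_eq0 ?expf_eq0 ?oner_eq0 /= ?hz0.
    rewrite /Good /app /= !mxE /=; split; congr pair.
    + by apply: (certL 2 0 0 ((1%:R) + (2%:R*z)) (- (d) + (3%:R*b) - (3%:R*b*z)) e1 e2 e3 hz); ring.
    + by apply: (certL 2 0 0 ((2%:R) + (z)) ((d)) e1 e2 e3 hz); ring.
    + by apply: (certL 2 ((1%:R) + (2%:R*z)) (- (1%:R) - (2%:R*z)) (- (2%:R) - (z)) ((2%:R*d) - (2%:R*d*z) - (3%:R*b) + (3%:R*b*z) + (b*z^+2) - (2%:R*b*z^+3) - (3%:R*a) + (2%:R*a*z)) e1 e2 e3 hz); ring.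
    + by apply: (certL 2 (- (1%:R) + (z)) (- (2%:R) - (z)) (- (1%:R) + (z)) (- (2%:R*d) - (d*z) - (b*z^+2) - (b*z^+3) + (a*z)) e1 e2 e3 hz); ring.
  - exists 0%N, 5%N.
    left; exists (z * (b*z+d)); split; first by apply: mulf_neq0; rewrite // ?oppr_eq0 ?expf_eq0 ?oner_eq0 /= ?hz0.
    rewrite /Good /app /= !mxE /=; split; congr pair.
    + by apply: (certL 2 ((1%:R) + (2%:R*z)) (- (1%:R) - (2%:R*z)) (- (2%:R) - (z)) ((2%:R*d) - (3%:R*d*z) - (3%:R*b) + (3%:R*b*z) - (2%:R*b*z^+3) - (3%:R*a) + (2%:R*a*z)) e1 e2 e3 hz); ring.
    + by apply: (certL 2 (- (1%:R) + (z)) (- (2%:R) - (z)) (- (1%:R) + (z)) (- (2%:R*d) - (b*z^+3) + (a*z)) e1 e2 e3 hz); ring.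
    + by apply: (certL 2 (- (1%:R) - (2%:R*z)) ((1%:R) + (2%:R*z)) ((1%:R) - (z)) (- (d) + (d*z) - (2%:R*b*z^+2) + (2%:R*b*z^+3) + (3%:R*a) - (2%:R*a*z)) e1 e2 e3 hz); ring.
    + by apply: (certL 2 ((1%:R) - (z)) ((2%:R) + (z)) (- (1%:R) - (2%:R*z)) ((d) - (d*z) - (b*z^+2) + (b*z^+3) - (a*z)) e1 e2 e3 hz); ring.
  - exists 0%N, 2%N.
    left; exists (1 * (b*z+d)); split; first by apply: mulf_neq0; rewrite // ?oppr_eq0 ?expf_eq0 ?oner_eq0 /= ?hz0.
    rewrite /Good /app /= !mxE /=; split; congr pair.
    + by apply: (certL 2 ((1%:R) + (2%:R*z)) (- (1%:R) - (2%:R*z)) ((1%:R) - (z)) (- (3%:R*d) + (2%:R*d*z) - (3%:R*b) + (b*z) - (3%:R*a) + (2%:R*a*z)) e1 e2 e3 hz); ring.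
    + by apply: (certL 2 (- (1%:R) + (z)) (- (2%:R) - (z)) (- (1%:R) - (2%:R*z)) (- (3%:R*d) + (d*z) - (b*z) + (a*z)) e1 e2 e3 hz); ring.
    + by apply: (certL 2 0 0 ((1%:R) + (2%:R*z)) ((3%:R*b) - (2%:R*b*z)) e1 e2 e3 hz); ring.
    + by apply: (certL 2 0 0 ((2%:R) + (z)) (- (b*z)) e1 e2 e3 hz); ring.
  - exists 0%N, 1%N.
    left; exists (z^+2 * (b*z+d)); split; first by apply: mulf_neq0; rewrite // ?oppr_eq0 ?expf_eq0 ?oner_eq0 /= ?hz0.
    rewrite /Good /app /= !mxE /=; split; congr pair.
    + by apply: (certL 2 0 0 ((1%:R) + (2%:R*z)) (- (d) + (3%:R*b) - (3%:R*b*z)) e1 e2 e3 hz); ring.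
    + by apply: (certL 2 0 0 ((2%:R) + (z)) ((d)) e1 e2 e3 hz); ring.
    + by apply: (certL 2 (- (1%:R) - (2%:R*z)) ((1%:R) + (2%:R*z)) (- (2%:R) - (z)) ((2%:R*d) - (2%:R*d*z) + (3%:R*a) - (2%:R*a*z)) e1 e2 e3 hz); ring.
    + by apply: (certL 2 ((1%:R) - (z)) ((2%:R) + (z)) (- (1%:R) + (z)) ((d) - (d*z) - (a*z)) e1 e2 e3 hz); ring.
  - exists 0%N, 3%N.
    left; exists (z * (b*z+d)); split; first by apply: mulf_neq0; rewrite // ?oppr_eq0 ?expf_eq0 ?oner_eq0 /= ?hz0.
    rewrite /Good /app /= !mxE /=; split; congr pair.
    + by apply: (certL 2 (- (1%:R) - (2%:R*z)) ((1%:R) + (2%:R*z)) (- (2%:R) - (z)) ((2%:R*d) - (3%:R*d*z) - (b*z^+2) + (3%:R*a) - (2%:R*a*z)) e1 e2 e3 hz); ring.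
    + by apply: (certL 2 ((1%:R) - (z)) ((2%:R) + (z)) (- (1%:R) + (z)) ((d) + (b*z^+2) - (a*z)) e1 e2 e3 hz); ring.
    + by apply: (certL 2 ((1%:R) + (2%:R*z)) (- (1%:R) - (2%:R*z)) ((1%:R) - (z)) (- (d) + (d*z) - (3%:R*b) + (3%:R*b*z) - (b*z^+2) - (3%:R*a) + (2%:R*a*z)) e1 e2 e3 hz); ring.
    + by apply: (certL 2 (- (1%:R) + (z)) (- (2%:R) - (z)) (- (1%:R) - (2%:R*z)) (- (2%:R*d) - (d*z) - (2%:R*b*z^+2) + (a*z)) e1 e2 e3 hz); ring.
  - exists 1%N, 0%N.
    right; exists (z^+2 * (b*z+d)); exists (z); split; first by [].
    rewrite /Good /app /= !mxE /=; split; congr pair.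
    + by apply: (certL 2 ((1%:R) - (z)) ((2%:R) + (z)) (- (1%:R) - (2%:R*z)) (- (b*z) + (b*z^+3) - (a*z)) e1 e2 e3 hz); ring.
    + by apply: (certL 2 (- (1%:R) - (2%:R*z)) ((1%:R) + (2%:R*z)) ((1%:R) - (z)) ((b*z) - (3%:R*b*z^+2) + (2%:R*b*z^+3) + (3%:R*a) - (2%:R*a*z)) e1 e2 e3 hz); ring.
    + by apply: (certL 2 0 0 ((2%:R) + (z)) ((3%:R*d) - (3%:R*d*z) + (2%:R*b*z) - (3%:R*b*z^+2)) e1 e2 e3 hz); ring.
    + by apply: (certL 2 0 0 ((1%:R) + (2%:R*z)) ((3%:R*b) - (2%:R*b*z)) e1 e2 e3 hz); ring.
  - exists 0%N, 0%N.
    right; exists (z * (b*z+d)); exists (z); split; first by [].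
    rewrite /Good /app /= !mxE /=; split; congr pair.
    + by apply: (certL 2 (- (1%:R) - (2%:R*z)) ((1%:R) + (2%:R*z)) ((1%:R) - (z)) (- (d) - (3%:R*b*z^+2) + (2%:R*b*z^+3) + (3%:R*a) - (2%:R*a*z)) e1 e2 e3 hz); ring.
    + by apply: (certL 2 ((1%:R) - (z)) ((2%:R) + (z)) (- (1%:R) - (2%:R*z)) ((d) + (b*z^+3) - (a*z)) e1 e2 e3 hz); ring.
    + by apply: (certL 2 0 0 ((1%:R) + (2%:R*z)) (- (d) + (3%:R*b) - (3%:R*b*z)) e1 e2 e3 hz); ring.
    + by apply: (certL 2 0 0 ((2%:R) + (z)) ((d)) e1 e2 e3 hz); ring.
  - exists 2%N, 0%N.
    right; exists (1 * (b*z+d)); exists (z); split; first by [].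
    rewrite /Good /app /= !mxE /=; split; congr pair.
    + by apply: (certL 2 ((1%:R) + (2%:R*z)) (- (1%:R) - (2%:R*z)) (- (1%:R) + (z)) (- (2%:R*d) + (d*z) - (3%:R*b*z) + (4%:R*b*z^+2) - (2%:R*b*z^+3) - (3%:R*a) + (2%:R*a*z)) e1 e2 e3 hz); ring.
    + by apply: (certL 2 ((2%:R) + (z)) ((1%:R) - (z)) (- (2%:R) - (z)) ((2%:R*d) - (d*z) + (2%:R*b*z^+2) - (b*z^+3) - (3%:R*a) + (a*z)) e1 e2 e3 hz); ring.
    + by apply: (certL 2 0 0 (- (1%:R) - (2%:R*z)) ((d) - (2%:R*d*z) - (3%:R*b) + (3%:R*b*z) - (2%:R*b*z^+2)) e1 e2 e3 hz); ring.
    + by apply: (certL 2 0 0 ((1%:R) - (z)) ((2%:R*d) - (d*z) - (3%:R*b) + (3%:R*b*z) - (b*z^+2)) e1 e2 e3 hz); ring.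
Qed.
Definition o0 : 'I_3 := Ordinal (isT : 0 < 3)%N.
Definition o1 : 'I_3 := Ordinal (isT : 1 < 3)%N.
Definition o2 : 'I_3 := Ordinal (isT : 2 < 3)%N.
Lemma inord0 : inord 0 = o0. Proof. by apply/val_inj; rewrite /= inordK. Qed.
Lemma inord1 : inord 1 = o1. Proof. by apply/val_inj; rewrite /= inordK. Qed.

Definition Wp (k : nat) : 'S_3 :=
  match k with
  | 0 => 1
  | 1 => tperm o0 o1
  | 2 => tperm o0 o2
  | 3 => tperm o1 o2
  | 4 => tperm o1 o2 * tperm o0 o1
  | _ => tperm o0 o1 * tperm o1 o2
  end%g.

Lemma cx1 s : comp_mpoly (Wsubst s) x1 = xs (s o0).
Proof. by rewrite /x1 comp_mpolyXU /= inord0. Qed.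
Lemma cx2 s : comp_mpoly (Wsubst s) x2 = xs (s o1).
Proof. by rewrite /x2 comp_mpolyXU /= inord1. Qed.

Lemma Wp_vals k : (xs (Wp k o0), xs (Wp k o1)) =
  match k with
  | 0 => (x1, x2) | 1 => (x2, x1) | 2 => (x3, x2) | 3 => (x1, x3)
  | 4 => (x2, x3) | _ => (x3, x1) end.
Proof.
by case: k => [|[|[|[|[|k]]]]]; rewrite /= ?perm1 ?permM; rewrite /tperm ?permE /=.
Qed.

Lemma cD s p q : comp_mpoly (Wsubst s) (p + q) = comp_mpoly (Wsubst s) p + comp_mpoly (Wsubst s) q.
Proof. exact: rmorphD. Qed.
Lemma cB s p q : comp_mpoly (Wsubst s) (p - q) = comp_mpoly (Wsubst s) p - comp_mpoly (Wsubst s) q.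
Proof. exact: rmorphB. Qed.
Lemma cM s p q : comp_mpoly (Wsubst s) (p * q) = comp_mpoly (Wsubst s) p * comp_mpoly (Wsubst s) q.
Proof. exact: rmorphM. Qed.
Lemma cX s p : comp_mpoly (Wsubst s) (p ^+ 2) = comp_mpoly (Wsubst s) p ^+ 2.
Proof. exact: rmorphXn. Qed.

Lemma Wp_rel k : comp_mpoly (Wsubst (Wp k)) rel1 = rel1 /\
                 comp_mpoly (Wsubst (Wp k)) rel2 = rel2.
Proof.
rewrite /rel1 /rel2 !cD !cM ?cX cx1 cx2.
by have := Wp_vals k; case: k => [|[|[|[|[|k]]]]] [-> ->]; rewrite /x3; split; ring.
Qed.

Lemma WactE s : comp_mpoly (Wsubst s) rel1 = rel1 ->
  comp_mpoly (Wsubst s) rel2 = rel2 ->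
  forall p, Wact s (piH p) = piH (comp_mpoly (Wsubst s) p).
Proof.
move=> h1 h2 p; rewrite /Wact.
have [A [B E]] : exists A B : Pol, generic_quotient.repr (piH p) - p = A * rel1 + B * rel2.
  by apply: piH_eq; rewrite /piH reprK.
apply: (piH_eq2 _ _ (comp_mpoly (Wsubst s) A) (comp_mpoly (Wsubst s) B)).
by rewrite -cB E cD !cM h1 h2.
Qed.

Lemma Wlin k u v : Wact (Wp k) (piH (lin u v)) =
  piH (lin (Wm k 0 0 * u + Wm k 0 1 * v) (Wm k 1 0 * u + Wm k 1 1 * v)).
Proof.
have [h1 h2] := Wp_rel k; rewrite (WactE _ h1 h2) {h1 h2} /lin cD !comp_mpolyZ cx1 cx2.
have := Wp_vals k; case: k => [|[|[|[|[|k]]]]] [-> ->]; rewrite /Wm !mxE /= /x3;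
congr piH; rewrite -!mul_mpolyC !rmorphD !rmorphM ?rmorphN ?rmorph1 ?rmorph0; ring.
Qed.

Lemma Psi_lin {Psi : {rmorphism Hcoh -> Hcoh}} {a b c d : CC} :
  (forall k : CC, Psi (piH k%:MP) = piH k%:MP) ->
  Psi (piH x1) = piH (lin a c) -> Psi (piH x2) = piH (lin b d) ->
  forall u v, Psi (piH (lin u v)) = piH (lin (a*u + b*v) (c*u + d*v)).
Proof.
move=> hC hx1 hx2 u v.
rewrite {1}/lin -!mul_mpolyC !piHD !piHM rmorphD !rmorphM !hC hx1 hx2 -!piHM -!piHD.
congr piH; rewrite /lin -!mul_mpolyC !rmorphD !rmorphM; ring.
Qed.

Lemma good_rep (Psi : {rmorphism Hcoh -> Hcoh}) a b c d k1 k2 T :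
  (forall u v, Psi (piH (lin u v)) = piH (lin (a*u + b*v) (c*u + d*v))) ->
  Good k1 k2 (mk22 a b c d) T ->
  represented_by (Wact (Wp k1) \o Psi \o Wact (Wp k2)) T.
Proof.
move=> hPsi [g1 g2].
have e1 : x1 = lin 1 0 by rewrite /lin scale1r scale0r addr0.
have e2 : x2 = lin 0 1 by rewrite /lin scale1r scale0r add0r.
rewrite /represented_by; move: g1 g2; rewrite /app /= !mxE /= => -[<- <-] [<- <-].
by split; rewrite /=; [rewrite {1}e1 | rewrite {1}e2]; rewrite Wlin hPsi Wlin.
Qed.

Lemma piHX p : piH (p ^+ 2) = piH p ^+ 2. Proof. exact: rmorphXn. Qed.

Theorem lemma3p7 (Psi : {rmorphism Hcoh -> Hcoh}) :
  graded_endo Psi ->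
  exists w1 w2 : 'S_3,
    (exists lambda : CC, lambda != 0 /\
       represented_by (Wact w1 \o Psi \o Wact w2) (lambda *: 1%:M))
    \/
    (exists lambda vs : CC, vs ^+ 2 + vs + 1 = 0 /\
       represented_by (Wact w1 \o Psi \o Wact w2) (lambda *: mx_1z00 vs)).
Proof.
move=> [hC hH2].
have [a [c hx1]] : exists a c, Psi (piH x1) = piH (lin a c).
  have [a [c ->]] : inH2 (Psi (piH x1)).
    by apply: hH2; exists 1, 0; rewrite scale1r scale0r addr0.
  by exists a, c.
have [b [d hx2]] : exists b d, Psi (piH x2) = piH (lin b d).
  have [b [d ->]] : inH2 (Psi (piH x2)).
    by apply: hH2; exists 0, 1; rewrite scale1r scale0r add0r.
  by exists b, d.
have PL := Psi_lin hC hx1 hx2.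
pose z : CC := (-1 + 'i * sqrtC 3) / 2%:R.
have hz : z^+2 + z + 1 = 0.
  have h4 : (z^+2 + z + 1) * 4%:R = 3%:R + 'i^+2 * sqrtC 3 ^+ 2.
    by rewrite /z; field.
  move: h4; rewrite sqrCi sqrtCK mulN1r subrr => /eqP.
  by rewrite mulf_eq0 pnatr_eq0 orbF => /eqP.
have hz2 : (z^+2)^+2 + z^+2 + 1 = 0.
  have -> : (z^+2)^+2 + z^+2 + 1 = (z^+2 + z + 1) * (z^+2 - z + 1) by ring.
  by rewrite hz mul0r.
have r1 : piH (lin a c ^+ 2 + lin b d ^+ 2 + lin a c * lin b d) = piH 0.
  have -> : piH (lin a c ^+ 2 + lin b d ^+ 2 + lin a c * lin b d) = Psi (piH rel1).
    by rewrite /rel1 !piHD !piHM ?piHX !rmorphD !rmorphM ?rmorphXn hx1 hx2.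
  have -> : piH rel1 = 0.
    by rewrite -piH0; apply: (piH_eq2 _ _ 1 0); ring.
  by rewrite rmorph0 piH0.
have r2 : piH (lin a c ^+ 2 * lin b d + lin a c * lin b d ^+ 2) = piH 0.
  have -> : piH (lin a c ^+ 2 * lin b d + lin a c * lin b d ^+ 2) = Psi (piH rel2).
    by rewrite /rel2 !piHD !piHM ?piHX !rmorphD !rmorphM ?rmorphXn hx1 hx2.
  have -> : piH rel2 = 0.
    by rewrite -piH0; apply: (piH_eq2 _ _ 0 1); ring.
  by rewrite rmorph0 piH0.
have [k1 [k2 H]] := core hz (condQ _ _ _ _ _ hz r1) (condQ _ _ _ _ _ hz2 r1) (condC _ _ _ _ _ _ hz hz2 r2).
exists (Wp k1), (Wp k2).
case: H => [[l [l0 G]]|[l [vs [hvs G]]]].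
  by left; exists l; split => //; apply: good_rep G.
by right; exists l, vs; split => //; apply: good_rep G.
Qed.
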